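(* For every $\delta\in(0,1/6)$, $\mathbb P$-a.s. for all $N$ large enough there exist radii $(\rho_x)_{x\in\mathbb H_N}$ with $1\le\rho_x\le N^{3\delta}$ such that for all $x\in\mathbb H_N$ and all $y\in\partial B(x,\rho_x)$ one has $\tau_y\le 2^{\frac12N^{1-\delta}}$.
   Context: $\mathbb H_N=\{-1,1\}^N$ with Hamming distance $d$; $B(x,r)=\{y:d(x,y)\le r\}$, $\partial B(x,r)=\{y:d(x,y)=r\}$. $(E_x)_{x\in\mathbb H_N,N\ge1}$ i.i.d. standard Gaussians on $(\Omega,\mathcal F,\mathbb P)$; $\beta>0$; $\tau_x=e^{\beta\sqrt NE_x}$. ''$\mathbb P$-a.s. for $N$ large enough'' means: for $\mathbb P$-a.e. realization there is $N_0$ such that the statement holds for all $N\ge N_0$. *)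

(* Defs.v *)
From HB Require Import structures.
From mathcomp Require Import all_boot all_order all_algebra.
From mathcomp Require Import all_classical all_reals all_analysis.
Set Implicit Arguments. Unset Strict Implicit. Unset Printing Implicit Defensive.
Import Order.TTheory GRing.Theory Num.Theory.
Local Open Scope classical_set_scope.
Local Open Scope ring_scope.

(* The hypercube H_N = {-1,1}^N, encoded as boolean functions on 'I_N
   (true <-> +1, false <-> -1). *)
Definition cube (N : nat) := {ffun 'I_N -> bool}.

Definition hamming (N : nat) (x y : cube N) : nat := #|[pred i | x i != y i]|.

Definition cube_index := {N : nat & cube N}.

Definition mutually_independent d (T : measurableType d) (R : realType)
  (P : probability T R) (I : eqType) (X : I -> T -> R) : Prop :=
  forall (J : seq I) (B : I -> set R),
    uniq J -> (forall i, i \in J -> measurable (B i)) ->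
    P (\bigcap_(i in [set` J]) (X i @^-1` B i)) =
    (\big[*%E/1%E]_(i <- J) P (X i @^-1` B i))%E.

Definition std_gaussian d (T : measurableType d) (R : realType)
  (P : probability T R) (X : T -> R) : Prop :=
  forall A : set R, measurable A -> P (X @^-1` A) = normal_prob 0 1 A.

Definition tau (R : realType) (beta : R) (N : nat) (e : R) : R :=
  expR (beta * Num.sqrt (N%:R) * e).

(* Main.v *)
Require Import Defs.
From HB Require Import structures.
From mathcomp Require Import all_boot all_order all_algebra.
From mathcomp Require Import all_classical all_reals all_analysis.
From mathcomp Require Import ring lra zify measurable_realfun.
Import Order.TTheory GRing.Theory Num.Theory.
Local Open Scope classical_set_scope.
Local Open Scope ring_scope.
Lemma peak_bound (R : realType) : normal_peak (1:R) <= 2 * normal_peak (Num.sqrt 2).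
Proof.
rewrite /normal_peak sqr_sqrtr // expr1n mul1r.
have pi0 : (0:R) < pi by exact: pi_gt0.
have -> : (2 * pi *+ 2 : R) = 2^+2 * pi by rewrite -mulr_natr; ring.
rewrite sqrtrM ?sqrtr_sqr ?ger0_norm ?sqr_ge0 // invfM mulrA divff // mul1r.
have h1 : (0:R) < pi *+ 2 by rewrite mulrn_wgt0.
rewrite lef_pV2 ?posrE ?sqrtr_gt0 //.
rewrite ler_sqrt //. rewrite -mulr_natr. lra. exact: ltW.
Qed.

Lemma gauss_tail (R : realType) (t : R) : 0 <= t ->
  (normal_prob 0 1 `]t, +oo[%classic <= (2 * expR (- (t ^+ 2) / 4))%:E)%E.
Proof.
move=> t0.
set c := 2 * expR (- (t ^+ 2) / 4).
have c0 : 0 <= c by rewrite mulr_ge0 ?expR_ge0.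
rewrite /normal_prob.
apply: (@le_trans _ _ (\int[lebesgue_measure]_(x in `]t, +oo[%classic)
   (c%:E * (normal_pdf 0 (Num.sqrt 2) x)%:E))%E).
  apply: ge0_le_integral => //.
  - by move=> x _; rewrite lee_fin normal_pdf_ge0.
  - by apply/measurable_funTS/measurable_EFinP; exact: measurable_normal_pdf.
  - apply/measurable_funTS/measurable_EFinP/measurable_funM => //. exact: measurable_normal_pdf.
  move=> x /=; rewrite in_itv /= andbT => tx.
  rewrite -EFinM lee_fin.
  have s0 : Num.sqrt (2:R) != 0 by rewrite gt_eqF // sqrtr_gt0.
  rewrite !normal_pdfE ?oner_neq0 // /normal_fun !subr0 sqr_sqrtr // expr1n.
  rewrite /c.
  set p1 := normal_peak 1. set p2 := normal_peak (Num.sqrt 2).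
  have h : t ^+ 2 <= x ^+ 2 by rewrite ler_sqr ?nnegrE ?(ltW tx) //; exact: (le_trans t0 (ltW tx)).
  have -> : (2:R) *+ 2 = 4 by rewrite -mulr_natr; ring.
  have -> : 2 * expR (- t ^+ 2 / 4) * (p2 * expR (- x ^+ 2 / 4)) =
     (2 * p2) * expR (- t ^+ 2 / 4 + - x ^+ 2 / 4) by rewrite expRD; ring.
  apply: ler_pM; first exact: normal_peak_ge0.
  - exact: expR_ge0.
  - exact: peak_bound.
  rewrite ler_expR. lra.
rewrite ge0_integralZl //; last first.
  - by move=> x _; rewrite lee_fin normal_pdf_ge0.
  - apply: measurable_funTS; apply/measurable_EFinP; exact: measurable_normal_pdf.
rewrite -[X in (_ <= X)%E]mule1 lee_pmul ?lee_fin //.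
  by apply: integral_ge0 => x _; rewrite lee_fin normal_pdf_ge0.
exact: (@probability_le1 _ _ _ (normal_prob 0 (Num.sqrt 2))).
Qed.
Lemma measurable_bigU d (T : measurableType d) (I : Type) (r : seq I) (Pr : pred I)
  (A : I -> set T) : (forall i, Pr i -> measurable (A i)) ->
  measurable (\big[setU/set0]_(i <- r | Pr i) A i).
Proof. by move=> mA; elim/big_ind: _ => //; exact: measurableU. Qed.

Lemma union_bound d (T : measurableType d) (R : realType) (mu : {measure set T -> \bar R})
  (I : Type) (r : seq I) (Pr : pred I) (A : I -> set T) :
  (forall i, Pr i -> measurable (A i)) ->
  (mu (\big[setU/set0]_(i <- r | Pr i) A i) <= \sum_(i <- r | Pr i) mu (A i))%E.
Proof.
move=> mA; elim: r => [|a r IH]; first by rewrite !big_nil measure0.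
rewrite !big_cons; case: ifP => Pa //.
apply: le_trans (measureU2 _ _ _) _; [exact: mA|exact: measurable_bigU|].
exact: leeD.
Qed.

Lemma in_bigU (T : Type) (I : eqType) (r : seq I) (Pr : pred I) (A : I -> set T) (w : T) :
  (exists i, [/\ i \in r, Pr i & A i w]) -> (\big[setU/set0]_(i <- r | Pr i) A i) w.
Proof.
elim: r => [|a r IH] [i [ir Pi Aw]]; first by rewrite in_nil in ir.
rewrite big_cons; move: ir; rewrite in_cons => /orP[/eqP ia|ir].
  by subst i; rewrite Pi; left.
case: ifP => _; last by apply: IH; exists i.
by right; apply: IH; exists i.
Qed.

Lemma prod_le (R : realType) (I : Type) (r : seq I) (p : I -> \bar R) (q : R) :
  (forall i, (0 <= p i)%E /\ (p i <= q%:E)%E) ->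
  (\prod_(i <- r) p i <= (q ^+ size r)%:E)%E.
Proof.
move=> hp; elim: r => [|a r IH]; first by rewrite big_nil.
rewrite big_cons /= exprS EFinM; have [h0 h1] := hp a.
apply: lee_pmul => //.
by apply: prode_ge0 => i _; have [] := hp i.
Qed.
Lemma ev_pow (R : realType) (c e1 e2 : R) : e1 < e2 ->
  exists N0 : nat, forall N : nat, (N0 <= N)%N -> c * N%:R `^ e1 <= N%:R `^ e2.
Proof.
move=> e12; set g := e2 - e1.
have g0 : 0 < g by rewrite subr_gt0.
set y := (Num.max c 1) `^ (g^-1).
exists (Num.truncn y).+1 => N hN.
have y0 : 0 <= y by exact: powR_ge0.
have yN : y <= N%:R.
  apply: le_trans (ltW (truncnS_gt y)) _; by rewrite ler_nat.
have N1 : (1 <= N)%N by apply: leq_trans hN.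
have N0 : (N%:R : R) != 0 by rewrite pnatr_eq0 -lt0n.
have -> : e2 = g + e1 by rewrite /g; ring.
rewrite powRD; last by rewrite N0 implybT.
rewrite ler_wpM2r ?powR_ge0 //.
have hc : c <= Num.max c 1 by rewrite le_max lexx.
have h1 : 1 <= Num.max c 1 by rewrite le_max lexx orbT.
apply: (le_trans hc).
have -> : Num.max c 1 = y `^ g.
  rewrite /y -powRrM mulVf ?gt_eqF // powRr1 //.
  exact: le_trans h1.
by apply: (ge0_ler_powR (ltW g0)); rewrite // nnegrE (le_trans y0 yN).
Qed.

Lemma ln_le_pow (R : realType) (n eps : R) : 0 < n -> 0 < eps ->
  ln n <= n `^ eps / eps.
Proof.
move=> n0 e0.
rewrite ler_pdivlMr // mulrC -ln_powR.
have p0 : 0 < n `^ eps by exact: powR_gt0.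
have := @le_ln1Dx R (n `^ eps - 1).
rewrite addrCA subrr addr0 => h.
apply: le_trans (h _) _; lra.
Qed.

Lemma exp_nat_pow (R : realType) (n : R) (m : nat) : 0 < n -> n ^+ m = expR (m%:R * ln n).
Proof. by move=> n0; rewrite expRM_natl lnK. Qed.

Lemma asym (R : realType) (a delta : R) : 0 < a -> 0 < delta -> delta < 1/6 ->
  exists N1 : nat, forall N : nat, (N1 <= N)%N ->
   (2 * expR (- (a * N%:R `^ (1/2 - delta)) ^+ 2 / 4)) ^+ (Num.truncn (N%:R `^ (3 * delta)))
     * ((N ^ (Num.truncn (N%:R `^ (3 * delta)))) ^ (Num.truncn (N%:R `^ (3 * delta))))%:R
     * (2 ^ N)%:R <= 1 / (2 ^ N.+1)%:R.
Proof.
move=> a0 d0 d6.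
set A := a ^+ 2 / 12.
have A0 : 0 < A by rewrite divr_gt0 // exprn_gt0.
have l2 : (0:R) < ln 2 by rewrite ln_gt0 // ltr1n.
set eps := (1 - 5 * delta) / 2.
have e0 : 0 < eps by rewrite /eps; lra.
have [N2 H2] := @ev_pow R (ln 2 / A) 0 (1 - 2 * delta) ltac:(lra).
have [N3 H3] := @ev_pow R (eps^-1 / A) (3 * delta + eps) (1 - 2 * delta) ltac:(rewrite /eps; lra).
have [N4 H4] := @ev_pow R (6 * ln 2 / A) 1 (1 + delta) ltac:(lra).
exists (maxn 1 (maxn N2 (maxn N3 N4))) => N.
rewrite !geq_max => /and4P[N1 hN2 hN3 hN4].
have {}H2 := H2 N hN2; have {}H3 := H3 N hN3; have {}H4 := H4 N hN4.
set n := (N%:R : R) in H2 H3 H4 *.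
have n1 : 1 <= n by rewrite /n ler1n.
have n0 : 0 < n by lra.
have nn0 : n != 0 by rewrite gt_eqF.
set x := n `^ (3 * delta).
have x1 : 1 <= x.
  have -> : (1:R) = 1 `^ (3 * delta) by rewrite powR1.
  apply: ge0_ler_powR; rewrite ?nnegrE; lra.
set K := Num.truncn x.
have Kx : K%:R <= x by rewrite truncn_le; lra.
have xK : x < K.+1%:R by exact: truncnS_gt.
have K1 : 1 <= (K%:R : R) by rewrite ler1n truncn_gt0.
rewrite -natr1 in xK.
set P := n `^ (1 - 2 * delta) in H2 H3 H4 *.
have tE : (a * n `^ (1/2 - delta)) ^+ 2 = a ^+ 2 * P.
  rewrite exprMn -[X in _ * X]powR_mulrn ?powR_ge0 // -powRrM /P; congr (_ * _ `^ _); lra.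
rewrite tE.
have lnn : 0 <= ln n by rewrite -ln1 ler_ln ?posrE //; lra.
have E1 : ln 2 <= A * P.
  move: H2; rewrite powRr0 mulr1 ler_pdivrMr // mulrC //.
have E2 : x * ln n <= A * P.
  have h := @ln_le_pow R n eps n0 e0.
  have hx : x * (n `^ eps / eps) = n `^ (3 * delta + eps) / eps.
    by rewrite /x powRD ?nn0 ?implybT // mulrA.
  apply: le_trans (ler_wpM2l (powR_ge0 _ _) h) _.
  rewrite hx. move: H3. rewrite -mulrA (mulrC _ (n `^ _)) mulrA ler_pdivrMr //.
  by rewrite mulrC (mulrC P).
have E3 : 6 * ln 2 * n <= A * (x * P).
  have hx : x * P = n `^ (1 + delta).
    by rewrite /x /P -powRD ?nn0 ?implybT //; congr (_ `^ _); lra.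
  rewrite hx; move: H4; rewrite powRr1 ?ler_pdivrMr; try lra.
  move=> h; have -> : 6 * ln 2 * n = A * (6 * ln 2 / A * n) by field; rewrite gt_eqF.
  by rewrite ler_pM2l.
have e2 : (2:R) = expR (ln 2) by rewrite lnK // posrE.
have p2 : (0:R) < 2 by [].
rewrite !natrX -exprM (@exp_nat_pow R n _ n0) (@exp_nat_pow R 2 _ p2).
rewrite {1}e2 -expRD -expRM_natl -!expRD.
rewrite (@exp_nat_pow R 2 _ p2) div1r -expRN ler_expR natrM -/n.
have -> : (N.+1%:R : R) = n + 1 by rewrite -natr1.
set k := (K%:R : R).
have kk : k * k * ln n <= k * (A * P).
  rewrite -mulrA ler_pM2l; last lra.
  apply: le_trans E2; rewrite ler_wpM2r //.
have k1 : k * ln 2 <= k * (A * P) by rewrite ler_pM2l //; lra.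
have k3 : 6 * ln 2 * n <= 2 * k * (A * P).
  apply: le_trans E3 _.
  have -> : 2 * k * (A * P) = A * (2 * k * P) by ring.
  rewrite ler_pM2l //; apply: ler_wpM2r; first exact: powR_ge0.
  lra.
have -> : a ^+ 2 * P = 12 * (A * P) by rewrite /A; field.
set AP := A * P.
have hL : ln 2 <= ln 2 * n by rewrite ler_peMr //; lra.
move: kk k1 k3 hL; set L := ln 2; move=> *.
rewrite /AP. lra.
Qed.
Definition sphere (N : nat) (x : cube N) (k : nat) : pred (cube N) :=
  [pred y | hamming x y == k].
Arguments sphere {N}.

Lemma ffact_le n k : (n ^_ k <= n ^ k)%N.
Proof.
elim: k n => [|k IH] n; first by [].
rewrite ffactnS expnS leq_mul2l; apply/orP; right.
apply: leq_trans (IH _) _; case: k {IH} => [|k] //; rewrite leq_exp2r //; exact: leq_pred.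
Qed.

Lemma bin_le n k : ('C(n, k) <= n ^ k)%N.
Proof.
apply: leq_trans (ffact_le n k); rewrite -bin_ffact leq_pmulr //; exact: fact_gt0.
Qed.

Lemma card_sphere N (x : cube N) k : (#|sphere x k| <= N ^ k)%N.
Proof.
pose D := fun y : cube N => [set i | x i != y i]%SET.
have injD : injective D.
  move=> y1 y2 h; apply/ffunP => i; have := congr1 (fun S : {set 'I_N} => i \in S) h.
  by rewrite /D !inE; case: (x i); case: (y1 i); case: (y2 i).
rewrite -(card_imset (mem (sphere x k)) injD).
apply: leq_trans (bin_le N k); have := card_draws ('I_N) k; rewrite card_ord => <-.
apply: subset_leq_card; apply/fintype.subsetP => S /imsetP[y yS ->].
by rewrite inE /D cardsE.
Qed.

Lemma foldr_le (s : seq nat) M : all (fun n => n <= M)%N s -> (foldr muln 1 s <= M ^ size s)%N.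
Proof.
elim: s => [|a s IH] //= /andP[aM sM]; rewrite expnS; apply: leq_mul => //; exact: IH.
Qed.

Lemma card_V N K (x : cube N) : (1 <= N)%N ->
  (#|family (fun r : 'I_K => sphere x r.+1)| <= (N ^ K) ^ K)%N.
Proof.
move=> N1; rewrite card_family.
apply: (leq_trans (@foldr_le _ (N ^ K) _)).
  apply/allP => n /mapP[r _ ->].
  apply: leq_trans (card_sphere _ x r.+1) _; apply: leq_pexp2l => //.
by rewrite size_map size_enum_ord.
Qed.

Lemma card_cube N : #|cube N| = (2 ^ N)%N.
Proof. by rewrite card_ffun card_bool card_ord. Qed.

Arguments sphere {N}.
Arguments union_bound {d T R mu I r Pr A}.
Arguments measurable_bigU {d T I r Pr A}.
Arguments prod_le {R I r p q}.
Arguments in_bigU {T I r Pr A w}.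

Definition thr (R : realType) (beta delta : R) (N : nat) : R :=
  ln 2 / (2 * beta) * N%:R `^ (1/2 - delta).
Definition KK (R : realType) (delta : R) (N : nat) : nat :=
  Num.truncn (N%:R `^ (3 * delta)).

Arguments thr {R}. Arguments KK {R}.

Lemma tau_bound (R : realType) (beta delta : R) (N : nat) (e : R) :
  0 < beta -> (1 <= N)%N -> e <= thr beta delta N ->
  tau beta N e <= 2 `^ ((N%:R) `^ (1 - delta) / 2).
Proof.
move=> b0 N1 he.
have n0 : (0:R) < N%:R by rewrite ltr0n.
have p2 : forall y, (2:R) `^ y = expR (y * ln 2).
  by move=> y; rewrite /powR (negbTE (_ : (2:R) != 0)).
rewrite /tau p2 ler_expR.
apply: (@le_trans _ _ (beta * Num.sqrt N%:R * thr beta delta N)).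
  by rewrite ler_wpM2l // mulr_ge0 ?sqrtr_ge0 ?ltW.
rewrite /thr -powR12_sqrt ?(ltW n0) //.
have -> : beta * N%:R `^ 2^-1 * (ln 2 / (2 * beta) * N%:R `^ (1 / 2 - delta)) =
   ln 2 / 2 * (N%:R `^ 2^-1 * N%:R `^ (1 / 2 - delta)).
  by field; rewrite gt_eqF.
rewrite -powRD; last by rewrite (gt_eqF n0) implybT.
have -> : 2^-1 + (1 / 2 - delta) = 1 - delta by field.
by rewrite le_eqVlt; apply/orP; left; apply/eqP; ring.
Qed.

Definition Jl (N K : nat) (f : {dffun forall r : 'I_K, cube N}) : seq cube_index :=
  [seq (existT _ N (f r) : cube_index) | r <- enum 'I_K].

Arguments Jl {N K}.

Definition Gset d (T : measurableType d) (R : realType) (P : probability T R)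
  (E : forall N : nat, cube N -> {RV P >-> R}) (t : R) (N K : nat)
  (f : {dffun forall r : 'I_K, cube N}) : set T :=
  \bigcap_(i in [set` Jl f]) ((fun i : cube_index => (E (tag i) (tagged i) : T -> R)) i
     @^-1` `]t, +oo[).

Arguments Gset {d T R P} E t {N K} f.

Lemma measurable_G d (T : measurableType d) (R : realType) (P : probability T R)
  (E : forall N : nat, cube N -> {RV P >-> R}) (t : R) (N K : nat)
  (f : {dffun forall r : 'I_K, cube N}) : measurable (Gset E t f).
Proof.
rewrite /Gset bigcap_seq; elim/big_ind: _ => //; first exact: measurableI.
by move=> i _; apply: measurable_funPTI.
Qed.

Lemma PG_le d (T : measurableType d) (R : realType) (P : probability T R)
  (E : forall N : nat, cube N -> {RV P >-> R}) (t : R) (N K : nat) (x : cube N)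
  (f : {dffun forall r : 'I_K, cube N}) :
  (forall N (x : cube N), std_gaussian P (E N x)) ->
  mutually_independent P (fun i : cube_index => (E (tag i) (tagged i) : T -> R)) ->
  0 <= t ->
  (forall r, hamming x (f r) = r.+1) ->
  (P (Gset E t f) <= ((2 * expR (- (t ^+ 2) / 4)) ^+ K)%:E)%E.
Proof.
move=> hG hI t0 hf.
have uJ : uniq (Jl f).
  rewrite /Jl map_inj_in_uniq ?enum_uniq // => r1 r2 _ _ h.
  have h2 := Eqdep_dec.inj_pair2_eq_dec _ PeanoNat.Nat.eq_dec _ _ _ _ h.
  apply: val_inj => /=; apply/eqP; rewrite -eqSS; apply/eqP.
  by rewrite -(hf r1) -(hf r2) h2.
have mB : forall i, i \in Jl f -> measurable (`]t, +oo[%classic : set R) by [].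
have -> : P (Gset E t f) =
   (\big[*%E/1%E]_(i <- Jl f) P ((E (tag i) (tagged i) : T -> R) @^-1` `]t, +oo[))%E.
  exact: (hI (Jl f) (fun=> `]t, +oo[%classic) uJ mB).
have hs : size (Jl f) = K by rewrite size_map size_enum_ord.
rewrite -[X in (_ <= (_ ^+ X)%:E)%E]hs.
apply: prod_le => i; split; first exact: measure_ge0.
by rewrite hG //; exact: gauss_tail.
Qed.

Definition Bset d (T : measurableType d) (R : realType) (P : probability T R)
  (E : forall N : nat, cube N -> {RV P >-> R}) (beta delta : R) (N : nat) : set T :=
  \big[setU/set0]_(x : cube N)
    \big[setU/set0]_(f in family (fun r : 'I_(KK delta N) => sphere x r.+1))
      Gset E (thr beta delta N) f.
Arguments Bset {d T R P} E beta delta N.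

Lemma measurable_B d (T : measurableType d) (R : realType) (P : probability T R)
  (E : forall N : nat, cube N -> {RV P >-> R}) (beta delta : R) (N : nat) :
  measurable (Bset E beta delta N).
Proof.
apply: measurable_bigU => x _; apply: measurable_bigU => f _; exact: measurable_G.
Qed.

Lemma thr_ge0 (R : realType) (beta delta : R) N : 0 < beta -> 0 <= thr beta delta N.
Proof.
move=> b0; rewrite /thr mulr_ge0 ?powR_ge0 // divr_ge0 ?mulr_ge0 ?ltW //.
by rewrite ln_gt0 // ltr1n.
Qed.

Lemma PB_le d (T : measurableType d) (R : realType) (P : probability T R)
  (E : forall N : nat, cube N -> {RV P >-> R}) (beta delta : R) (N : nat) :
  (forall N (x : cube N), std_gaussian P (E N x)) ->
  mutually_independent P (fun i : cube_index => (E (tag i) (tagged i) : T -> R)) ->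
  0 < beta -> (1 <= N)%N ->
  (P (Bset E beta delta N) <=
    (((2 * expR (- (thr beta delta N ^+ 2) / 4)) ^+ KK delta N
       *+ (N ^ KK delta N) ^ KK delta N) *+ 2 ^ N)%:E)%E.
Proof.
move=> hG hI b0 N1.
set K := KK delta N. set t := thr beta delta N.
set c := (2 * expR (- (t ^+ 2) / 4)) ^+ K.
have c0 : 0 <= c by rewrite exprn_ge0 // mulr_ge0 ?expR_ge0.
apply: le_trans (union_bound _) _.
  by move=> x _; apply: measurable_bigU => f _; exact: measurable_G.
apply: le_trans (@lee_sum _ _ _ (fun _ => (c *+ (N ^ K) ^ K)%:E) _ _ _) _.
  move=> x _.
  apply: le_trans (union_bound _) _; first by move=> f _; exact: measurable_G.
  apply: le_trans (@lee_sum _ _ _ (fun _ => c%:E) _ _ _) _.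
    move=> f /familyP hf; apply: PG_le => //; first exact: thr_ge0.
    by move=> r; apply/eqP; exact: (hf r).
  rewrite sumEFin sumr_const lee_fin.
  by rewrite -(mulr_natr c) -(mulr_natr c) ler_wpM2l // ler_nat; exact: card_V.
by rewrite sumEFin sumr_const card_cube.
Qed.

Lemma good_point d (T : measurableType d) (R : realType) (P : probability T R)
  (E : forall N : nat, cube N -> {RV P >-> R}) (beta delta : R) (N : nat) (w : T) :
  0 < beta -> 0 < delta -> (1 <= N)%N -> ~ Bset E beta delta N w ->
  exists rho : cube N -> nat,
       forall x : cube N,
         (1 <= rho x)%N /\ (rho x)%:R <= (N%:R) `^ (3 * delta) /\
         forall y : cube N, hamming x y = rho x ->
           tau beta N (E N y w) <= 2 `^ ((N%:R) `^ (1 - delta) / 2).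
Proof.
move=> b0 d0 N1 nB.
set K := KK delta N; set t := thr beta delta N.
pose good x (r : 'I_K) := [forall y, (hamming x y == r.+1) ==> (E N y w <= t)].
exists (fun x => if [pick r | good x r] is Some r then r.+1 else 1%N).
have n1 : (1:R) <= N%:R by rewrite ler1n.
have x1 : (1:R) <= N%:R `^ (3 * delta).
  have h := @ge0_ler_powR R (3 * delta) ltac:(lra) 1 N%:R.
  rewrite powR1 /= in h; apply: h; rewrite ?nnegrE //; lra.
move=> x; case: pickP => [r hr | hnone].
  split => //; split.
    apply: le_trans _ (_ : (K%:R <= _)); first by rewrite ler_nat (ltn_ord r).
    by rewrite truncn_le powR_ge0.
  move=> y hy; apply: tau_bound => //.
  by move/forallP: hr => /(_ y) /implyP; apply; rewrite hy.
exfalso; apply: nB.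
have ex : forall r : 'I_K, exists y, (hamming x y == r.+1) && (t < E N y w).
  move=> r; have := hnone r; move/negbT => /forallPn [y].
  by rewrite negb_imply => /andP[h1 h2]; exists y; rewrite h1 ltNge h2.
pose f : {dffun forall r : 'I_K, cube N} :=
  [ffun r : 'I_K => odflt x [pick y | (hamming x y == r.+1) && (t < E N y w)]].
have hf : forall r, (hamming x (f r) == r.+1) && (t < E N (f r) w).
  move=> r; rewrite /f ffunE; case: pickP => [y hy | h] //=.
  by have [y hy] := ex r; rewrite h in hy.
apply: in_bigU; exists x; split => //.
apply: in_bigU; exists f; split => //.
  by apply/familyP => r; exact: (andP (hf r)).1.
move=> i /= /mapP[r _ ->] /=.
by rewrite in_itv /= andbT; exact: (andP (hf r)).2.
Qed.

Theorem lemma4p2 (d : measure_display) (T : measurableType d) (R : realType)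
  (P : probability T R) (E : forall N : nat, cube N -> {RV P >-> R})
  (beta : R) (delta : R) :
  (forall N (x : cube N), std_gaussian P (E N x)) ->
  mutually_independent P (fun i : cube_index => (E (tag i) (tagged i) : T -> R)) ->
  0 < beta ->
  0 < delta -> delta < 1 / 6 ->
  {ae P, forall w : T, exists N0 : nat, forall N : nat, (N0 <= N)%N ->
     exists rho : cube N -> nat,
       forall x : cube N,
         (1 <= rho x)%N /\ (rho x)%:R <= (N%:R) `^ (3 * delta) /\
         forall y : cube N, hamming x y = rho x ->
           tau beta N (E N y w) <= 2 `^ ((N%:R) `^ (1 - delta) / 2)}.
Proof.
move=> hG hI b0 d0 d6.
have a0 : 0 < ln 2 / (2 * beta) by rewrite divr_gt0 ?mulr_gt0 // ln_gt0 // ltr1n.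
have [N1 HN1] := @asym R _ _ a0 d0 d6.
pose M := maxn N1 1.
pose F := fun n : nat => if (M <= n)%N then Bset E beta delta n else set0.
have mF : forall n, measurable (F n).
  by move=> n; rewrite /F; case: ifP => _; [exact: measurable_B | exact: measurable0].
have PF : forall n, (P (F n) <= (1 / (2 ^ (n + 1))%:R)%:E)%E.
  move=> n; rewrite /F; case: ifPn => hn; last by rewrite measure0 lee_fin divr_ge0.
  move: hn; rewrite geq_max => /andP[hn1 hn2].
  apply: le_trans (@PB_le _ _ _ _ E beta delta n hG hI b0 hn2) _.
  rewrite lee_fin -(mulr_natr (_ *+ _)) -mulr_natr addn1.
  exact: HN1.
have sum_fin : (\sum_(0 <= n <oo) P (F n) < +oo)%E.
  apply: (@le_lt_trans _ _ (\sum_(0 <= n <oo) ((1 / (2 ^ (n + 1))%:R)%:E))%E).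
    by apply: lee_nneseries => // n _ _; exact: measure_ge0.
  have h := @cvg_geometric_eseries_half R 1 0.
  rewrite expr0 divr1 in h.
  have -> : (\sum_(0 <= n <oo) ((1 / (2 ^ (n + 1))%:R)%:E) = (1%:E : \bar R))%E.
    exact: (cvg_lim _ h).
  exact: ltry.
have P0 := lim_sup_set_cvg0 mF sum_fin.
exists (lim_sup_set F); split => //.
  rewrite /lim_sup_set; apply: bigcap_measurable; first by exists 0%N.
  by move=> k _; apply: bigcup_measurable => j _; exact: mF.
move=> w /= nQ; rewrite /lim_sup_set => n _.
apply: contrapT => hn; apply: nQ.
exists (maxn n M) => N; rewrite geq_max => /andP[hnN hMN].
have nF : ~ F N w by move=> h; apply: hn; exists N.
rewrite /F hMN in nF.
apply: good_point => //.
by move: hMN; rewrite geq_max => /andP[].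
Qed.
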